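(* Let $G=(V,E)$ be a graph and $v\in V$. Then $v\in\mathrm{core}(G)$ if and only if one of the following holds: (1) $v$ is isolated; (2) $\gamma(G-v)>\gamma(G)$; (3) $\gamma(G-v)=\gamma(G)$ and every neighbor $w\in N(v)$ satisfies $w\in\mathrm{anticore}(G-v)$.
   Context: All graphs are finite, simple and undirected. $N(v)$ is the set of neighbors of $v$. $\gamma(G)$ is the domination number (minimum size of a dominating set); a minimum dominating set (mds) is a dominating set of size $\gamma(G)$. For a graph $H$, $\mathrm{core}(H)$ is the set of vertices belonging to every mds of $H$, $\mathrm{corona}(H)$ the set of vertices belonging to at least one mds of $H$, and $\mathrm{anticore}(H)=V(H)\setminus\mathrm{corona}(H)$. $G-v$ is the graph obtained by deleting $v$. A vertex is isolated if it has no neighbors. *)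

(* Defs.v *)
(* A finite simple graph is a finType T of vertices with a
   symmetric irreflexive adjacency relation e : rel T. *)
From mathcomp Require Import all_boot.
Set Implicit Arguments. Unset Strict Implicit. Unset Printing Implicit Defensive.

Section Domination.
Variables (T : finType) (e : rel T).

Definition dominating (D : {set T}) : bool :=
  [forall x, (x \in D) || [exists y in D, e x y]].

(* domination number: minimum size of a dominating set (setT is dominating). *)
Definition gamma : nat :=
  \big[minn/#|T|]_(D : {set T} | dominating D) #|D|.

Definition mds (D : {set T}) : bool := dominating D && (#|D| == gamma).

Definition in_core (v : T) : bool := [forall D : {set T}, mds D ==> (v \in D)].
Definition in_corona (v : T) : bool := [exists D : {set T}, mds D && (v \in D)].
Definition in_anticore (v : T) : bool := ~~ in_corona v.

Definition isolated (v : T) : bool := [forall w, ~~ e v w].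
End Domination.

Definition delV (T : finType) (v : T) : finType := {x : T | x != v}.
Definition del_rel (T : finType) (e : rel T) (v : T) : rel (delV v) :=
  fun x y => e (val x) (val y).

(* Main.v *)
Require Import Defs.
From mathcomp Require Import all_boot.

Set Implicit Arguments. Unset Strict Implicit. Unset Printing Implicit Defensive.

Lemma gamma_le (T : finType) (e : rel T) (D : {set T}) :
  dominating e D -> gamma e <= #|D|.
Proof.
move=> H; rewrite /gamma.
have : D \in index_enum {set T} by rewrite mem_index_enum.
elim: (index_enum _) => [//|a s IH]; rewrite inE big_cons.
case/orP=> [/eqP <- | Ds]; first by rewrite H geq_minl.
case: (dominating e a) => //=; first rewrite geq_min IH ?orbT //; exact: IH.
Qed.

Lemma gamma_ex (T : finType) (e : rel T) : exists D, mds e D.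
Proof.
have : exists D, dominating e D && (#|D| == gamma e).
  rewrite /gamma; apply: (big_ind (fun m => exists D, dominating e D && (#|D| == m))).
  - exists setT; rewrite cardsT eqxx andbT; apply/forallP=> x; by rewrite in_setT.
  - move=> a b [Da Ha] [Db Hb]; case: (leqP a b) => ab.
      by exists Da.
    by exists Db.
  - by move=> D HD; exists D; rewrite HD eqxx.
by case=> D HD; exists D.
Qed.

Section Del.
Variables (T : finType) (e : rel T) (v : T).

Definition up (D : {set delV v}) : {set T} := [set val x | x in D].
Definition down (D : {set T}) : {set delV v} := [set x : delV v | val x \in D].

Lemma card_up D : #|up D| = #|D|.
Proof. by rewrite card_imset //; apply: val_inj. Qed.

Lemma v_notin_up D : v \notin up D.
Proof. by apply/imsetP => -[x _ /eqP]; rewrite eq_sym (negbTE (valP x)). Qed.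

Lemma up_down (D : {set T}) : v \notin D -> up (down D) = D.
Proof.
move=> vD; apply/setP => y; apply/imsetP/idP.
  by case=> x; rewrite inE => xD ->.
move=> yD; have yv : y != v by apply: contraNneq vD => <-.
by exists (Sub y yv : delV v); rewrite ?inE.
Qed.

Lemma card_down (D : {set T}) : v \notin D -> #|down D| = #|D|.
Proof. by move=> vD; rewrite -card_up up_down. Qed.

Lemma dom_up (D : {set delV v}) (S : {set T}) :
  dominating (@del_rel T e v) D -> (v \in S) || [exists y in S, e v y] ->
  up D \subset S -> dominating e S.
Proof.
move=> H Hv sub; apply/forallP => x; case: (eqVneq x v) => [-> //| xv].
case/orP: (forallP H (Sub x xv : delV v)) => [xD | /existsP [y /andP [yD exy]]].
  by rewrite (subsetP sub) //; apply/imsetP; exists (Sub x xv : delV v).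
apply/orP; right; apply/existsP; exists (val y); rewrite andbC; apply/andP; split; first exact: exy.
by rewrite (subsetP sub) //; apply/imsetP; exists y.
Qed.

Lemma dom_down (D : {set T}) : v \notin D -> dominating e D ->
  dominating (@del_rel T e v) (down D).
Proof.
move=> vD H; apply/forallP => x.
case/orP: (forallP H (val x)) => [xD | /existsP [y /andP [yD exy]]].
  by rewrite inE xD.
have yv : y != v by apply: contraNneq vD => <-.
apply/orP; right; apply/existsP; exists (Sub y yv : delV v).
by rewrite inE /= yD.
Qed.
End Del.

Theorem theorem5 (T : finType) (e : rel T)
  (e_sym : symmetric e) (e_irr : irreflexive e) (v : T) :
  in_core e v <->
  [\/ isolated e v,
      gamma (@del_rel T e v) > gamma e
    | gamma (@del_rel T e v) = gamma e /\
      (forall w : delV v, e v (val w) -> in_anticore (@del_rel T e v) w)].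
Proof.
split.
- move=> Hcore.
  have core D : dominating e D -> #|D| = gamma e -> v \in D.
    by move=> dD cD; apply: (implyP (forallP Hcore D)); rewrite /mds dD cD eqxx.
  case iso: (isolated e v); first by apply: Or31.
  move/negbT: iso => /forallPn [w /negPn evw].
  have wv : w != v by apply: contraTneq evw => ->; rewrite e_irr.
  case: (ltnP (gamma e) (gamma (@del_rel T e v))) => [lt|le]; first by apply: Or32.
  apply: Or33.
  have [D' /andP [dD' /eqP cD']] := gamma_ex (@del_rel T e v).
  have ge : gamma e <= gamma (@del_rel T e v).
    rewrite leqNgt; apply/negP => lt.
    set S := w |: up D'.
    have dS : dominating e S.
      apply: (dom_up dD'); last by apply: subsetUr.
      apply/orP; right; apply/existsP; exists w; by rewrite evw setU11.
    have cS : #|S| <= gamma e.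
      by rewrite cardsU1 card_up cD'; case: (w \in up D') => /=; rewrite ?add1n // ltnW.
    have := core S dS (anti_leq (introT andP (conj cS (gamma_le dS)))).
    by rewrite in_setU1 (negbTE (v_notin_up D')) orbF eq_sym (negbTE wv).
  have eqg : gamma (@del_rel T e v) = gamma e by apply/eqP; rewrite eqn_leq le ge.
  split => // w' ew'; apply/negP => /existsP [D /andP [/andP [dD /eqP cD] w'D]].
  have dS : dominating e (up D).
    apply: (dom_up dD) => //; apply/orP; right; apply/existsP; exists (val w').
    by rewrite ew' andbT; apply/imsetP; exists w'.
  have := core _ dS; rewrite card_up cD eqg (negbTE (v_notin_up D)).
  by move=> /(_ erefl).
- move=> H; apply/forallP => D; apply/implyP => /andP [dD /eqP cD].
  apply/negPn/negP => vD.
  case: H => [iso | lt | [eqg Hw]].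
  + case/orP: (forallP dD v) => [vD0 | /existsP [y /andP [_ evy]]].
        by rewrite vD0 in vD.
    by move: (forallP iso y); rewrite evy.
  + have := gamma_le (dom_down vD dD); rewrite card_down // cD.
    by rewrite leqNgt lt.
  + case/orP: (forallP dD v) => [vD' | /existsP [y /andP [yD evy]]].
      by rewrite vD' in vD.
    have yv : y != v by apply: contraNneq vD => <-.
    have := Hw (Sub y yv) evy; rewrite /in_anticore => /negP; apply.
    apply/existsP; exists (down v D); rewrite inE /= yD andbT /mds.
    by rewrite dom_down // card_down // cD eqg eqxx.
Qed.
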